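(* Let $\psi\in\mathcal K$ have radius of convergence $R_\psi>0$ and let $g$ be the solution of Lagrange's equation $g(z)=z\psi(g(z))$. For $t\in(0,R_\psi)$ put $\psi_t(z)=\psi(tz)/\psi(t)$ and let $g_t$ be the power series solving $g_t(z)=z\psi_t(g_t(z))$. Then for $t\in(0,R_\psi)$, $$g_t(z)=\frac{g(tz/\psi(t))}{t}\qquad\text{for all }|z|\le1.$$ The holomorphic function $g_t$ is continuous on $\partial\mathbb D$ and satisfies $g_t(\mathbb D)\subset\mathbb D$. Moreover, $g_t$ is the probability generating function of $Z_{t/\psi(t)}$ whenever either $\psi\in\mathcal K^\star$ and $t\in[0,\tau]$, or $\psi\in\mathcal K\setminus\mathcal K^\star$ and $t\in(0,R_\psi)$, where $(Z_s)$ is the Khinchin family of $g$.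
   Context: $\mathcal K$ is the class of non-constant power series $f(z)=\sum_{n\ge0}a_nz^n$ with positive radius of convergence $R$, non-negative coefficients and $a_0>0$; its Khinchin family $(X_t)$ is given by $\mathbf P(X_t=n)=a_nt^n/f(t)$ ($n\ge0$, $t\in(0,R)$), $X_0\equiv 0$, with mean $m_f(t)=tf'(t)/f(t)$; thus $\psi_t$ is the probability generating function of the Khinchin family variable $Y_t$ of $\psi$. For $t=0$ one sets $\psi_0\equiv1$ and $g_0(z)=z$. $\mathcal K^\star$ is the subclass with $\lim_{t\uparrow R}m_f(t)>1$, with apex $\tau$ the unique point where $m_\psi(\tau)=1$. The solution $g(z)=\sum_{n\ge1}A_nz^n$ of Lagrange's equation has non-negative coefficients, $A_1=\psi(0)$; for $\psi\in\mathcal K^\star$ its radius of convergence is $\rho=\tau/\psi(\tau)$, it converges on the closed disk $\overline{\mathbb D(0,\rho)}$ and $g(\rho)=\tau$. The Khinchin family $(Z_s)$ of $g$ is $\mathbf P(Z_s=n)=A_ns^n/g(s)$, $n\ge1$ (including $s=\rho$ when $\psi\in\mathcal K^\star$; $Z_0$ is the point mass at $1$). $\mathbb D$ is the open unit disk. *)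

(* Defs.v *)
From Stdlib Require Import Reals.
From Coquelicot Require Import Coquelicot.
Open Scope R_scope.

(* a : coefficients of psi(z) = sum a_n z^n *)
Definition in_K (a : nat -> R) : Prop :=
  (forall n, 0 <= a n) /\ 0 < a 0%nat /\
  (exists n, (1 <= n)%nat /\ a n <> 0) /\
  Rbar_lt (Finite 0) (CV_radius a).

Definition mean (a : nat -> R) (t : R) : R :=
  t * Derive (PSeries a) t / PSeries a t.

Definition Rbar_at_left (x : Rbar) : (R -> Prop) -> Prop :=
  match x with
  | Finite r => at_left r
  | _ => Rbar_locally x
  end.

Definition in_Kstar (a : nat -> R) : Prop :=
  exists L : Rbar,
    filterlim (mean a) (Rbar_at_left (CV_radius a)) (Rbar_locally L) /\
    Rbar_lt (Finite 1) L.

Definition conv (u v : nat -> R) (n : nat) : R :=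
  sum_f_R0 (fun k => u k * v (n - k)%nat) n.

Definition delta0 (n : nat) : R := match n with O => 1 | _ => 0 end.

Fixpoint fpow (u : nat -> R) (k : nat) : nat -> R :=
  match k with
  | O => delta0
  | S k' => conv u (fpow u k')
  end.

(* A is the (formal) solution g = sum A_n z^n of Lagrange's equation
   g(z) = z psi(g(z)), psi = sum a_n z^n:
   A_0 = 0 and [z^(n+1)] g = [z^n] sum_k a_k g^k  (terms k > n vanish). *)
Definition lagrange_sol (a A : nat -> R) : Prop :=
  A 0%nat = 0 /\
  forall n, A (S n) = sum_f_R0 (fun k => a k * fpow A k n) n.

Definition psi_t_coef (a : nat -> R) (t : R) (n : nat) : R :=
  a n * t ^ n / PSeries a t.

Definition cterm (c : nat -> R) (z : Complex.C) (n : nat) : Complex.C :=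
  Cmult (RtoC (c n)) (Cpow z n).

Definition csum (c : nat -> R) (z : Complex.C) : Complex.C :=
  (Series (fun n => Re (cterm c z n)), Series (fun n => Im (cterm c z n))).

(* Khinchin family (Z_s) of g = sum A_n z^n : P(Z_s = n) = A_n s^n / g(s),
   Z_0 = point mass at 1 *)
Definition khinchin_g (A : nat -> R) (s : R) (n : nat) : R :=
  if Req_EM_T s 0 then (match n with 1%nat => 1 | _ => 0 end)
  else A n * s ^ n / PSeries A s.

(* Main.v *)
Require Import Defs.
From Stdlib Require Import Reals.
From Coquelicot Require Import Coquelicot.
From Stdlib Require Import Lra Lia Classical.
Open Scope R_scope.


Lemma sum_zero (f : nat -> R) N : (forall i, (i <= N)%nat -> f i = 0) -> sum_f_R0 f N = 0.
Proof.
  induction N; intros H; simpl.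
  - apply H; lia.
  - rewrite IHN; [rewrite H; [ring|lia]|]. intros; apply H; lia.
Qed.

Lemma sum_mono_N (f : nat -> R) m n : (forall i, 0 <= f i) -> (m <= n)%nat ->
  sum_f_R0 f m <= sum_f_R0 f n.
Proof.
  intros Hf Hmn; induction Hmn; [lra|]. simpl. specialize (Hf (S m0)); lra.
Qed.

Lemma sum_term_le (f : nat -> R) k n : (forall i, 0 <= f i) -> (k <= n)%nat ->
  f k <= sum_f_R0 f n.
Proof.
  intros Hf Hk. apply Rle_trans with (sum_f_R0 f k); [|apply sum_mono_N; auto].
  destruct k; simpl; [lra|]. assert (0 <= sum_f_R0 f k) by (apply cond_pos_sum; auto). lra.
Qed.

Lemma sum_swap (f : nat -> nat -> R) N M :
  sum_f_R0 (fun i => sum_f_R0 (fun j => f i j) M) N =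
  sum_f_R0 (fun j => sum_f_R0 (fun i => f i j) N) M.
Proof.
  induction N; simpl.
  - reflexivity.
  - rewrite IHN. rewrite <- sum_plus. reflexivity.
Qed.

Lemma fpow_nonneg_le u k n : (forall m, (m <= n)%nat -> 0 <= u m) -> 0 <= fpow u k n.
Proof.
  revert n; induction k; intros n H; simpl.
  - destruct n; simpl; lra.
  - unfold conv. induction n as [|n' _] using nat_ind; [simpl|].
    + apply Rmult_le_pos. apply H; lia. apply IHk. intros m Hm; apply H; lia.
    + apply Rle_trans with (sum_f_R0 (fun _ => 0) (S n')).
      * rewrite sum_zero; [lra| auto].
      * apply sum_Rle. intros i Hi. apply Rmult_le_pos. apply H; lia. apply IHk. intros m Hm; apply H; lia.
Qed.

Lemma fpow_nonneg u k n : (forall m, 0 <= u m) -> 0 <= fpow u k n.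
Proof. intros H; apply fpow_nonneg_le; auto. Qed.

Lemma fpow_ext u v k n : (forall m, (m <= n)%nat -> u m = v m) -> fpow u k n = fpow v k n.
Proof.
  revert n; induction k; intros n H; simpl; [reflexivity|].
  unfold conv. apply sum_eq. intros i Hi. rewrite H by lia. rewrite (IHk (n - i)%nat); [reflexivity|].
  intros m Hm; apply H; lia.
Qed.

Lemma fpow_low u k n : u 0%nat = 0 -> (n < k)%nat -> fpow u k n = 0.
Proof.
  revert n; induction k; intros n H0 Hn; [lia|]. simpl. unfold conv.
  apply sum_zero. intros i Hi. destruct i.
  - rewrite H0; ring.
  - rewrite IHk; [ring|auto|lia].
Qed.

Lemma fpow_scale u c t k n : t <> 0 ->
  fpow (fun m => u m * c ^ m / t) k n = fpow u k n * c ^ n / t ^ k.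
Proof.
  intros Ht. revert n; induction k; intros n; simpl.
  - destruct n; simpl; field.
  - unfold conv. match goal with |- _ = ?S * ?X / ?Y => replace (S * X / Y) with ((X / Y) * S) by (unfold Rdiv; ring) end.
    rewrite scal_sum. apply sum_eq. intros i Hi. rewrite IHk.
    assert (Hc : c ^ n = c ^ i * c ^ (n - i)) by (rewrite <- pow_add; f_equal; lia).
    rewrite Hc. field.
    split; auto. apply pow_nonzero; auto.
Qed.

Lemma lagrange_unique a u v : lagrange_sol a u -> lagrange_sol a v -> forall n, u n = v n.
Proof.
  intros [Hu0 Hu] [Hv0 Hv].
  assert (forall N m, (m <= N)%nat -> u m = v m).
  { induction N; intros m Hm.
    - replace m with 0%nat by lia. congruence.
    - destruct (Compare_dec.le_lt_dec m N) as [Hl|Hl]; [auto|]. replace m with (S N) by lia.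
      rewrite Hu, Hv. apply sum_eq. intros k Hk. f_equal. apply fpow_ext. auto. }
  intros n; apply (H n); lia.
Qed.

Lemma lagrange_nonneg a A : (forall n, 0 <= a n) -> lagrange_sol a A -> forall n, 0 <= A n.
Proof.
  intros Ha [H0 HS].
  assert (forall N m, (m <= N)%nat -> 0 <= A m).
  { induction N; intros m Hm.
    - replace m with 0%nat by lia. lra.
    - destruct (Compare_dec.le_lt_dec m N) as [Hl|Hl]; [auto|]. replace m with (S N) by lia.
      rewrite HS. apply cond_pos_sum. intros k. apply Rmult_le_pos; auto.
      apply fpow_nonneg_le. auto. }
  intros n; apply (H n); lia.
Qed.

Lemma is_series_lim (f : nat -> R) l : is_series f l -> is_lim_seq (fun N => sum_f_R0 f N) l.
Proof.
  intros H. apply (is_lim_seq_ext (sum_n f)). intros; apply sum_n_Reals. exact H.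
Qed.

Lemma psum_le_series f l N : is_series f l -> (forall n, 0 <= f n) -> sum_f_R0 f N <= l.
Proof.
  intros H Hf. apply (is_lim_seq_incr_compare (fun N => sum_f_R0 f N)).
  apply is_series_lim; auto. intros n; simpl; specialize (Hf (S n)); lra.
Qed.

Lemma series_le_bound f l B : is_series f l -> (forall N, sum_f_R0 f N <= B) -> l <= B.
Proof.
  intros H HB. apply is_series_lim in H.
  assert (Hc := is_lim_seq_const B).
  exact (is_lim_seq_le _ _ _ _ HB H Hc).
Qed.

Lemma pos_bounded f B : (forall n, 0 <= f n) -> (forall N, sum_f_R0 f N <= B) ->
  ex_series f /\ Series f <= B.
Proof.
  intros Hf HB.
  assert (ex_series f).
  { apply ex_series_Reals_1. apply growing_cv.
    - intros n; simpl; specialize (Hf (S n)); lra.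
    - exists B. intros x [N ->]. auto. }
  split; auto. apply (series_le_bound f). apply Series_correct; auto. auto.
Qed.

Lemma is_series_first (f : nat -> R) : (forall n, f (S n) = 0) -> is_series f (f 0%nat).
Proof.
  intros H. apply is_series_Reals. intros eps Heps. exists 0%nat. intros n _.
  replace (sum_f_R0 f n) with (f 0%nat).
  - unfold Rdist; rewrite Rminus_diag, Rabs_R0; auto.
  - induction n; simpl; auto. rewrite H, <- IHn; ring.
Qed.

Lemma PSeries_R a x : PSeries a x = Series (fun n => a n * x ^ n).
Proof.
  rewrite PSeries_eq. apply Series_ext. intros n. rewrite pow_n_pow. unfold scal; simpl.
  unfold mult; simpl. ring.
Qed.

Lemma pseries_is a x : Rbar_lt (Rabs x) (CV_radius a) -> is_series (fun n => a n * x ^ n) (PSeries a x).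
Proof.
  intros H. apply is_pseries_R. apply PSeries_correct. apply CV_radius_inside; auto.
Qed.

Lemma Rbar_lt_abs (x : R) (r : Rbar) : 0 <= x -> Rbar_lt x r -> Rbar_lt (Rabs x) r.
Proof. intros H1 H2. rewrite Rabs_pos_eq; auto. Qed.

Lemma psi_ge a x : (forall n, 0 <= a n) -> 0 <= x -> Rbar_lt x (CV_radius a) ->
  forall N, sum_f_R0 (fun n => a n * x ^ n) N <= PSeries a x.
Proof.
  intros Ha Hx HR N. apply psum_le_series. apply pseries_is, Rbar_lt_abs; auto.
  intros n; apply Rmult_le_pos; auto. apply pow_le; auto.
Qed.

Lemma psi_pos a x : (forall n, 0 <= a n) -> 0 < a 0%nat -> 0 <= x -> Rbar_lt x (CV_radius a) ->
  0 < PSeries a x.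
Proof.
  intros Ha H0 Hx HR. eapply Rlt_le_trans; [|apply (psi_ge a x Ha Hx HR 0)]. simpl; lra.
Qed.

Lemma psi_mono a x y : (forall n, 0 <= a n) -> 0 <= x -> x <= y -> Rbar_lt y (CV_radius a) ->
  PSeries a x <= PSeries a y.
Proof.
  intros Ha Hx Hxy HR. rewrite !PSeries_R. apply Series_le.
  - intros n; split. apply Rmult_le_pos; auto; apply pow_le; auto.
    apply Rmult_le_compat_l; auto. apply pow_incr; auto.
  - eexists; apply pseries_is, Rbar_lt_abs; auto; lra.
Qed.

Lemma sum_shift (f : nat -> R) N : sum_f_R0 f (S N) = f 0%nat + sum_f_R0 (fun n => f (S n)) N.
Proof. induction N; simpl in *; [ring|]. rewrite IHN; ring. Qed.

Lemma sum_extend (f : nat -> R) n N : (n <= N)%nat -> (forall k, (n < k)%nat -> (k <= N)%nat -> f k = 0) ->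
  sum_f_R0 f N = sum_f_R0 f n.
Proof.
  intros H; induction H; intros Hz; [reflexivity|]. simpl. rewrite IHle.
  - rewrite (Hz (S m)); [ring|lia|lia].
  - intros k H1 H2; apply Hz; lia.
Qed.

Lemma conv_pow u v x n : conv u v n * x ^ n =
  sum_f_R0 (fun j => (u j * x ^ j) * (v (n - j)%nat * x ^ (n - j))) n.
Proof.
  unfold conv. rewrite Rmult_comm, scal_sum. apply sum_eq. intros i Hi.
  assert (Hc : x ^ n = x ^ i * x ^ (n - i)) by (rewrite <- pow_add; f_equal; lia).
  rewrite Hc. ring.
Qed.

Lemma delta0_sum x N : sum_f_R0 (fun n => delta0 n * x ^ n) N = 1.
Proof. induction N; simpl in *; [ring|]. rewrite IHN; ring. Qed.

Lemma Q_bound A x : (forall n, 0 <= A n) -> 0 <= x -> forall k N,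
  sum_f_R0 (fun n => fpow A k n * x ^ n) N <= (sum_f_R0 (fun n => A n * x ^ n) N) ^ k.
Proof.
  intros HA Hx k. induction k; intros N.
  - simpl. rewrite delta0_sum. lra.
  - set (P := sum_f_R0 (fun n => A n * x ^ n) N).
    assert (HP : 0 <= P) by (apply cond_pos_sum; intros; apply Rmult_le_pos; auto; apply pow_le; auto).
    assert (Hfp : forall m, 0 <= fpow A k m * x ^ m) by (intros; apply Rmult_le_pos; [apply fpow_nonneg; auto|apply pow_le; auto]).
    apply Rle_trans with (P * sum_f_R0 (fun n => fpow A k n * x ^ n) N).
    + simpl fpow. rewrite (sum_eq _ (fun n => sum_f_R0 (fun j => (A j * x ^ j) * (fpow A k (n - j)%nat * x ^ (n - j))) n)).
      2:{ intros i _. apply conv_pow. }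
      destruct N.
      * simpl. unfold P; simpl. lra.
      * unfold P. rewrite (cauchy_finite (fun n => A n * x ^ n) (fun n => fpow A k n * x ^ n) (S N)) by lia.
        match goal with |- _ <= _ + ?R => assert (0 <= R) end.
        { apply cond_pos_sum. intros n. apply cond_pos_sum. intros l. apply Rmult_le_pos; auto.
          apply Rmult_le_pos; auto; apply pow_le; auto. }
        lra.
    + simpl pow. apply Rmult_le_compat_l; auto.
Qed.

Section Conv.
Variables (a A : nat -> R).
Hypothesis Ha : forall n, 0 <= a n.
Hypothesis HA : lagrange_sol a A.

Lemma A_nonneg : forall n, 0 <= A n.
Proof. apply (lagrange_nonneg a A Ha HA). Qed.

Lemma A_S_expand n N : (n <= N)%nat ->
  A (S n) = sum_f_R0 (fun k => a k * fpow A k n) N.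
Proof.
  intros H. destruct HA as [H0 HS]. rewrite HS. symmetry. apply sum_extend; auto.
  intros k H1 H2. rewrite fpow_low; auto; ring.
Qed.

Lemma P_bound c t : 0 <= c -> 0 <= t -> Rbar_lt t (CV_radius a) -> c * PSeries a t <= t ->
  forall N, sum_f_R0 (fun n => A n * c ^ n) N <= t.
Proof.
  intros Hc Ht HR Hct N. induction N.
  - simpl. destruct HA as [H0 _]. rewrite H0. lra.
  - rewrite sum_shift. destruct HA as [H0 _]. rewrite H0, Rmult_0_l, Rplus_0_l.
    set (P := sum_f_R0 (fun n => A n * c ^ n) N).
    assert (HP : 0 <= P) by (apply cond_pos_sum; intros; apply Rmult_le_pos; [apply A_nonneg|apply pow_le; auto]).
    rewrite (sum_eq _ (fun n => sum_f_R0 (fun k => a k * (fpow A k n * c ^ n)) N * c)).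
    2:{ intros i Hi. rewrite (A_S_expand i N Hi). simpl pow. rewrite Rmult_comm, scal_sum; symmetry; rewrite Rmult_comm, scal_sum.
        apply sum_eq. intros; ring. }
    rewrite <- (scal_sum (fun n => sum_f_R0 (fun k => a k * (fpow A k n * c ^ n)) N) N c).
    rewrite (sum_swap (fun n k => a k * (fpow A k n * c ^ n))).
    rewrite (sum_eq _ (fun k => a k * sum_f_R0 (fun n => fpow A k n * c ^ n) N)).
    2:{ intros i _. rewrite scal_sum. apply sum_eq. intros; ring. }
    apply Rle_trans with (c * sum_f_R0 (fun k => a k * P ^ k) N).
    { apply Rmult_le_compat_l; auto. apply sum_Rle. intros k _. apply Rmult_le_compat_l; auto.
      apply Q_bound; auto. apply A_nonneg. }
    apply Rle_trans with (c * PSeries a P).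
    { apply Rmult_le_compat_l; auto. apply psi_ge; auto. eapply Rbar_le_lt_trans; [|apply HR]. simpl. auto. }
    apply Rle_trans with (c * PSeries a t); auto.
    apply Rmult_le_compat_l; auto. apply psi_mono; auto.
Qed.

End Conv.

Lemma sum_le_support (f : nat -> R) K n : (forall i, 0 <= f i) -> (forall k, (n < k)%nat -> f k = 0) ->
  sum_f_R0 f K <= sum_f_R0 f n.
Proof.
  intros Hf Hz. destruct (Compare_dec.le_lt_dec K n).
  - apply sum_mono_N; auto.
  - rewrite (sum_extend f n K); [lra|lia|]. intros; apply Hz; auto.
Qed.

Lemma is_series_R_plus (u v : nat -> R) lu lv : is_series u lu -> is_series v lv ->
  is_series (fun n => u n + v n) (lu + lv).
Proof. intros H1 H2. apply (is_series_plus _ _ _ _ H1 H2). Qed.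

Lemma is_series_R_scal (u : nat -> R) l c : is_series u l -> is_series (fun n => c * u n) (c * l).
Proof. intros H. apply (is_series_scal_l c _ _ H). Qed.

Section D.
Variables (a A : nat -> R).
Hypothesis Ha : forall n, 0 <= a n.
Hypothesis HA : lagrange_sol a A.
Variable c : R.
Hypothesis Hc : 0 < c.
Hypothesis Hex : ex_series (fun n => A n * c ^ n).

Let G := Series (fun n => A n * c ^ n).

Lemma fpow_series k : is_series (fun n => fpow A k n * c ^ n) (G ^ k).
Proof.
  induction k.
  - replace (G ^ 0) with (delta0 0 * c ^ 0) by (simpl; ring).
    apply (is_series_first (fun n => delta0 n * c ^ n)). intros n; simpl; ring.
  - apply (is_series_ext (fun n => sum_f_R0 (fun j => (A j * c ^ j) * (fpow A k (n - j)%nat * c ^ (n - j))) n));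
    [|simpl pow; apply (is_series_mult_pos (fun n => A n * c ^ n) (fun n => fpow A k n * c ^ n))].
    + intros n. simpl fpow. rewrite conv_pow. reflexivity.
    + apply Series_correct; auto.
    + auto.
    + intros n; apply Rmult_le_pos; [apply (A_nonneg a); auto|apply pow_le; lra].
    + intros n; apply Rmult_le_pos; [apply fpow_nonneg, (A_nonneg a); auto|apply pow_le; lra].
Qed.

Lemma finite_series K : is_series (fun n => sum_f_R0 (fun k => a k * (fpow A k n * c ^ n)) K)
  (sum_f_R0 (fun k => a k * G ^ k) K).
Proof.
  induction K.
  - exact (is_series_R_scal _ _ _ (fpow_series 0)).
  - exact (is_series_R_plus _ _ _ _ IHK (is_series_R_scal _ _ _ (fpow_series (S K)))).
Qed.

Lemma cpsiG : 0 <= G -> Rbar_lt G (CV_radius a) -> c * PSeries a G <= G.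
Proof.
  intros HG0 HGR.
  apply (series_le_bound (fun k => c * (a k * G ^ k))).
  { apply is_series_R_scal, pseries_is, Rbar_lt_abs; auto. }
  intros K. rewrite (sum_eq _ (fun k => a k * G ^ k * c)) by (intros; ring). rewrite <- scal_sum.
  rewrite <- (is_series_unique _ _ (finite_series K)).
  rewrite <- Series_scal_l.
  assert (HS : ex_series (fun n => A (S n) * c ^ (S n))) by (apply (ex_series_incr_1 (fun n => A n * c ^ n)); auto).
  apply Rle_trans with (Series (fun n => A (S n) * c ^ (S n))).
  - apply Series_le; auto. intros n. split.
    + apply Rmult_le_pos; [lra|]. apply cond_pos_sum. intros k. apply Rmult_le_pos; auto.
      apply Rmult_le_pos; [apply fpow_nonneg, (A_nonneg a); auto|apply pow_le; lra].
    + destruct HA as [H0 HSn]. rewrite HSn. simpl pow.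
      apply Rle_trans with (sum_f_R0 (fun i => a i * fpow A i n * (c ^ n * c)) K).
      * right. rewrite scal_sum. apply sum_eq. intros; ring.
      * apply Rle_trans with (sum_f_R0 (fun i => a i * fpow A i n * (c ^ n * c)) n);
        [apply sum_le_support|].
        -- intros i. apply Rmult_le_pos; [apply Rmult_le_pos; auto; apply fpow_nonneg, (A_nonneg a); auto|].
           apply Rmult_le_pos; [apply pow_le|]; lra.
        -- intros k Hk. rewrite fpow_low; auto; ring.
        right. rewrite (Rmult_comm (sum_f_R0 (fun k => a k * fpow A k n) n)), scal_sum. apply sum_eq; intros; ring.
  - right. unfold G. rewrite (Series_incr_1 (fun n => A n * c ^ n)); auto.
    destruct HA as [H0 _]. rewrite H0. ring.
Qed.

End D.

Lemma mean_eq a x : Rbar_lt (Rabs x) (CV_radius a) ->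
  mean a x = x * PSeries (PS_derive a) x / PSeries a x.
Proof. intros H. unfold mean. rewrite Derive_PSeries; auto. Qed.

Lemma Rbar_lt_trans_R (x t : R) (r : Rbar) : x <= t -> Rbar_lt t r -> Rbar_lt x r.
Proof. intros H1 H2. eapply Rbar_le_lt_trans; [|apply H2]. simpl; auto. Qed.

Section E.
Variables (a A : nat -> R).
Hypothesis Ha : forall n, 0 <= a n.
Hypothesis Ha0 : 0 < a 0%nat.
Hypothesis HA : lagrange_sol a A.
Variable t : R.
Hypothesis Ht : 0 < t.
Hypothesis HtR : Rbar_lt t (CV_radius a).

Let c := t / PSeries a t.

Lemma psit_pos : 0 < PSeries a t.
Proof. apply psi_pos; auto; lra. Qed.

Lemma c_pos : 0 < c.
Proof. unfold c. apply Rdiv_lt_0_compat; auto. apply psit_pos. Qed.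

Lemma G_facts : ex_series (fun n => A n * c ^ n) /\ 0 < Series (fun n => A n * c ^ n)
  /\ Series (fun n => A n * c ^ n) <= t.
Proof.
  assert (Hc := c_pos). assert (Hp := psit_pos).
  assert (HB := P_bound a A Ha HA c t (Rlt_le _ _ Hc) (Rlt_le _ _ Ht) HtR).
  assert (Hct : c * PSeries a t <= t) by (unfold c; right; field; lra).
  specialize (HB Hct).
  assert (Hnn : forall n, 0 <= A n * c ^ n) by (intros; apply Rmult_le_pos; [apply (A_nonneg a); auto|apply pow_le; lra]).
  destruct (pos_bounded _ t Hnn HB) as [Hex Hle].
  split; [auto|split; auto].
  apply Rlt_le_trans with (sum_f_R0 (fun n => A n * c ^ n) 1).
  - simpl. destruct HA as [H0 HS]. rewrite H0, (HS 0%nat). simpl. 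
    assert (0 < a 0%nat * 1 * (c * 1)) by (apply Rmult_lt_0_compat; lra). lra.
  - apply psum_le_series; auto. apply Series_correct; auto.
Qed.

Lemma G_eq_t : (forall x, 0 < x < t -> mean a x < 1) -> Series (fun n => A n * c ^ n) = t.
Proof.
  intros Hm. destruct G_facts as [Hex [HG0 HGt]].
  set (G := Series (fun n => A n * c ^ n)) in *.
  destruct (Rle_lt_or_eq_dec _ _ HGt) as [Hlt|]; [exfalso|auto].
  assert (HGR : Rbar_lt G (CV_radius a)) by (apply (Rbar_lt_trans_R _ t); [lra|auto]).
  assert (Hc := c_pos).
  assert (HcG := cpsiG a A Ha HA c Hc Hex (Rlt_le _ _ HG0) HGR). fold G in HcG.
  set (h := fun x => x / PSeries a x).
  set (h' := fun x => (1 * PSeries a x - x * PSeries (PS_derive a) x) / PSeries a x ^ 2).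
  assert (Hd : forall x, G <= x <= t -> derivable_pt_lim h x (h' x)).
  { intros x Hx. apply is_derive_Reals. unfold h, h'.
    assert (HxR : Rbar_lt (Rabs x) (CV_radius a)) by (apply Rbar_lt_abs; [lra|apply (Rbar_lt_trans_R _ t); [lra|auto]]).
    apply (is_derive_div (fun y => y) (PSeries a)).
    - apply (is_derive_id x).
    - apply is_derive_PSeries; auto.
    - apply Rgt_not_eq, psi_pos; auto; [lra|]. apply (Rbar_lt_trans_R _ t); [lra|auto]. }
  destruct (MVT_cor2 h h' G t Hlt Hd) as [x [Heq Hx]].
  assert (HxR : Rbar_lt (Rabs x) (CV_radius a)) by (apply Rbar_lt_abs; [lra|apply (Rbar_lt_trans_R _ t); [lra|auto]]).
  assert (Hpx : 0 < PSeries a x) by (apply psi_pos; auto; [lra|apply (Rbar_lt_trans_R _ t); [lra|auto]]).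
  assert (HpG : 0 < PSeries a G) by (apply psi_pos; auto; lra).
  assert (Hht : h t = c) by reflexivity.
  assert (HhG : c <= h G).
  { unfold h. apply (Rmult_le_reg_r (PSeries a G)); auto. unfold Rdiv. rewrite Rmult_assoc, Rinv_l; lra. }
  assert (Hh'x : h' x <= 0).
  { destruct (Rle_lt_dec (h' x) 0); auto. assert (0 < h' x * (t - G)) by (apply Rmult_lt_0_compat; lra). lra. }
  specialize (Hm x ltac:(lra)). rewrite mean_eq in Hm; auto.
  unfold h' in Hh'x.
  assert (Hsq : 0 < PSeries a x ^ 2) by (apply pow_lt; auto).
  assert (1 * PSeries a x - x * PSeries (PS_derive a) x <= 0).
  { apply (Rmult_le_reg_r (/ PSeries a x ^ 2)). apply Rinv_0_lt_compat; auto. rewrite Rmult_0_l. exact Hh'x. }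
  apply (Rmult_lt_compat_r (PSeries a x)) in Hm; auto.
  unfold Rdiv in Hm. rewrite Rmult_assoc, Rinv_l in Hm; lra.
Qed.

End E.

Lemma mm_cont a y : (forall n, 0 <= a n) -> 0 < a 0%nat -> 0 <= y -> Rbar_lt y (CV_radius a) ->
  continuity_pt (fun y => y * PSeries (PS_derive a) y / PSeries a y - 1) y.
Proof.
  intros Ha Ha0 Hy HR.
  assert (HyR : Rbar_lt (Rabs y) (CV_radius a)) by (apply Rbar_lt_abs; auto).
  apply (continuity_pt_minus (fun y => y * PSeries (PS_derive a) y / PSeries a y) (fun _ => 1)).
  - apply (continuity_pt_div (fun y => y * PSeries (PS_derive a) y) (PSeries a)).
    + apply (continuity_pt_mult (fun y => y) (PSeries (PS_derive a))).
      * apply derivable_continuous_pt, derivable_pt_id.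
      * apply PSeries_continuity. rewrite CV_radius_derive; auto.
    + apply PSeries_continuity; auto.
    + apply Rgt_not_eq, psi_pos; auto.
  - apply continuity_pt_const. intros u v; reflexivity.
Qed.

Lemma Kstar_mean a (t : R) : (forall n, 0 <= a n) -> 0 < a 0%nat -> Rbar_lt t (CV_radius a) ->
  (forall tau, 0 < tau -> Rbar_lt tau (CV_radius a) -> mean a tau = 1 -> t <= tau) ->
  forall x, 0 < x < t -> mean a x < 1.
Proof.
  intros Ha Ha0 HtR Hh x Hx.
  assert (HxR : Rbar_lt x (CV_radius a)) by (apply (Rbar_lt_trans_R _ t); [lra|auto]).
  destruct (Rlt_le_dec (mean a x) 1) as [|Hge]; auto. exfalso.
  destruct (Rle_lt_or_eq_dec _ _ Hge) as [Hgt|Heq].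
  - set (f := fun y => y * PSeries (PS_derive a) y / PSeries a y - 1).
    assert (Hp0 : 0 < PSeries a 0) by (apply psi_pos; auto; [lra|apply (Rbar_lt_trans_R _ x); [lra|auto]]).
    destruct (Ranalysis5.IVT_interv f 0 x) as [z [Hz Hfz]].
    + intros y Hy. apply mm_cont; auto; [lra|apply (Rbar_lt_trans_R _ x); [lra|auto]].
    + lra.
    + unfold f. rewrite Rmult_0_l. unfold Rdiv; rewrite Rmult_0_l. lra.
    + unfold f. rewrite <- mean_eq; [lra|]. apply Rbar_lt_abs; auto; lra.
    + assert (Hz0 : z <> 0).
      { intros ->. unfold f in Hfz. rewrite Rmult_0_l in Hfz. unfold Rdiv in Hfz; rewrite Rmult_0_l in Hfz. lra. }
      assert (HzR : Rbar_lt z (CV_radius a)) by (apply (Rbar_lt_trans_R _ x); [lra|auto]).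
      assert (mean a z = 1).
      { rewrite mean_eq; [|apply Rbar_lt_abs; auto; lra]. unfold f in Hfz. lra. }
      assert (t <= z) by (apply Hh; auto; lra). lra.
  - assert (t <= x) by (apply Hh; auto; lra). lra.
Qed.

Lemma sum_reflect (f : nat -> R) n : sum_f_R0 (fun j => f (n - j)%nat) n = sum_f_R0 f n.
Proof.
  revert f; induction n; intros f; [reflexivity|].
  rewrite sum_shift. simpl (S n - 0)%nat. simpl (S n - S _)%nat.
  change (f (S n) + sum_f_R0 (fun j => f (n - j)%nat) n = sum_f_R0 f (S n)).
  rewrite IHn. simpl. ring.
Qed.

Definition Dq (u : nat -> R) : nat -> R := PS_incr_1 (PS_derive u).

Lemma Dq_eq u n : Dq u n = INR n * u n.
Proof. unfold Dq, PS_incr_1, PS_derive. destruct n; simpl; [unfold zero; simpl; ring|reflexivity]. Qed.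

Lemma Dq_rad u : CV_radius (Dq u) = CV_radius u.
Proof. unfold Dq. rewrite CV_radius_incr_1, CV_radius_derive. reflexivity. Qed.

Lemma Dq_PSeries u y : PSeries (Dq u) y = y * PSeries (PS_derive u) y.
Proof. unfold Dq. apply PSeries_incr_1. Qed.

Section G.
Variable a : nat -> R.
Hypothesis Ha : forall n, 0 <= a n.
Hypothesis Ha0 : 0 < a 0%nat.
Hypothesis Hk : exists k, (1 <= k)%nat /\ a k <> 0.

Definition mm y := PSeries (Dq a) y / PSeries a y.

Lemma mean_mm y : Rbar_lt (Rabs y) (CV_radius a) -> mean a y = mm y.
Proof. intros H. rewrite mean_eq; auto. unfold mm. rewrite Dq_PSeries. reflexivity. Qed.

Definition ee n := sum_f_R0 (fun j => a j * a (n - j)%nat * (INR (n - j) * INR (n - j) - INR j * INR (n - j))) n.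

Lemma ee_twice n : 2 * ee n = sum_f_R0 (fun j => a j * a (n - j)%nat * (INR (n - j) - INR j) ^ 2) n.
Proof.
  unfold ee. replace (2 * _) with (sum_f_R0 (fun j => a j * a (n - j)%nat * (INR (n - j) * INR (n - j) - INR j * INR (n - j))) n
   + sum_f_R0 (fun j => a (n - j)%nat * a (n - (n - j))%nat * (INR (n - (n - j)) * INR (n - (n - j)) - INR (n - j) * INR (n - (n - j)))) n).
  2:{ rewrite (sum_reflect (fun j => a j * a (n - j)%nat * (INR (n - j) * INR (n - j) - INR j * INR (n - j)))). ring. }
  rewrite <- sum_plus. apply sum_eq. intros i Hi. replace (n - (n - i))%nat with i by lia. ring.
Qed.

Lemma ee_nonneg n : 0 <= ee n.
Proof.
  assert (0 <= 2 * ee n); [|lra]. rewrite ee_twice. apply cond_pos_sum. intros j.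
  apply Rmult_le_pos; [apply Rmult_le_pos; auto|]. apply pow2_ge_0.
Qed.

Lemma ee_pos k : (1 <= k)%nat -> a k <> 0 -> 0 < ee k.
Proof.
  intros Hk1 Hak. assert (0 < 2 * ee k); [|lra]. rewrite ee_twice.
  eapply Rlt_le_trans; [|apply (sum_term_le _ 0%nat k)].
  - simpl. rewrite Nat.sub_0_r. apply Rmult_lt_0_compat.
    + apply Rmult_lt_0_compat; auto. destruct (Ha k); auto. congruence.
    + assert (0 < INR k) by (apply lt_0_INR; lia). nra.
  - intros j. apply Rmult_le_pos; [apply Rmult_le_pos; auto|]. apply pow2_ge_0.
  - lia.
Qed.

Lemma num_pos y : 0 < y -> Rbar_lt y (CV_radius a) ->
  0 < PSeries (Dq (Dq a)) y * PSeries a y - PSeries (Dq a) y * PSeries (Dq a) y.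
Proof.
  intros Hy HR. assert (HyR : Rbar_lt (Rabs y) (CV_radius a)) by (apply Rbar_lt_abs; auto; lra).
  assert (S0 := pseries_is a y HyR).
  assert (S1 : is_series (fun n => Dq a n * y ^ n) (PSeries (Dq a) y)) by (apply pseries_is; rewrite Dq_rad; auto).
  assert (S2 : is_series (fun n => Dq (Dq a) n * y ^ n) (PSeries (Dq (Dq a)) y)) by (apply pseries_is; rewrite !Dq_rad; auto).
  assert (Hy0 : forall n, 0 <= y ^ n) by (intros; apply pow_le; lra).
  assert (HD : forall n, 0 <= Dq a n) by (intros; rewrite Dq_eq; apply Rmult_le_pos; auto; apply pos_INR).
  assert (HDD : forall n, 0 <= Dq (Dq a) n) by (intros; rewrite Dq_eq; apply Rmult_le_pos; auto; apply pos_INR).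
  assert (P1 := is_series_mult_pos _ _ _ _ S0 S2 (fun n => Rmult_le_pos _ _ (Ha n) (Hy0 n)) (fun n => Rmult_le_pos _ _ (HDD n) (Hy0 n))).
  assert (P2 := is_series_mult_pos _ _ _ _ S1 S1 (fun n => Rmult_le_pos _ _ (HD n) (Hy0 n)) (fun n => Rmult_le_pos _ _ (HD n) (Hy0 n))).
  assert (P3 := is_series_minus _ _ _ _ P1 P2).
  assert (P4 : is_series (fun n => ee n * y ^ n)
     (PSeries a y * PSeries (Dq (Dq a)) y - PSeries (Dq a) y * PSeries (Dq a) y)).
  { eapply is_series_ext; [|exact P3]. intros n. unfold plus, opp; simpl.
    fold (Rminus (sum_f_R0 (fun k => a k * y ^ k * (Dq (Dq a) (n - k)%nat * y ^ (n - k))) n)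
                 (sum_f_R0 (fun k => Dq a k * y ^ k * (Dq a (n - k)%nat * y ^ (n - k))) n)).
    rewrite <- minus_sum. unfold ee. rewrite Rmult_comm, scal_sum. apply sum_eq. intros i Hi.
    rewrite !Dq_eq.
    assert (Hc : y ^ n = y ^ i * y ^ (n - i)) by (rewrite <- pow_add; f_equal; lia).
    rewrite Hc. ring. }
  destruct Hk as [k [Hk1 Hak]].
  rewrite Rmult_comm.
  eapply Rlt_le_trans; [|apply (psum_le_series _ _ k P4)].
  - eapply Rlt_le_trans; [|apply (sum_term_le (fun n => ee n * y ^ n) k k)].
    + apply Rmult_lt_0_compat; [apply ee_pos; auto|apply pow_lt; lra].
    + intros n; apply Rmult_le_pos; [apply ee_nonneg|auto].
    + lia.
  - intros n; apply Rmult_le_pos; [apply ee_nonneg|auto].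
Qed.

Definition mm' y := (PSeries (PS_derive (Dq a)) y * PSeries a y - PSeries (Dq a) y * PSeries (PS_derive a) y)
   / PSeries a y ^ 2.

Lemma mm_deriv y : 0 <= y -> Rbar_lt y (CV_radius a) -> is_derive mm y (mm' y).
Proof.
  intros Hy HR. assert (HyR : Rbar_lt (Rabs y) (CV_radius a)) by (apply Rbar_lt_abs; auto).
  apply is_derive_div.
  - apply is_derive_PSeries. rewrite Dq_rad; auto.
  - apply is_derive_PSeries; auto.
  - apply Rgt_not_eq, psi_pos; auto.
Qed.

Lemma mm'_pos y : 0 < y -> Rbar_lt y (CV_radius a) -> 0 < mm' y.
Proof.
  intros Hy HR. unfold mm'. apply Rdiv_lt_0_compat; [|apply pow_lt, psi_pos; auto; lra].
  apply (Rmult_lt_reg_l y); auto. rewrite Rmult_0_r.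
  assert (H := num_pos y Hy HR). rewrite !Dq_PSeries in H.
  replace (y * (PSeries (PS_derive (Dq a)) y * PSeries a y - PSeries (Dq a) y * PSeries (PS_derive a) y))
   with (y * PSeries (PS_derive (Dq a)) y * PSeries a y - PSeries (Dq a) y * (y * PSeries (PS_derive a) y)) by ring.
  rewrite Dq_PSeries. lra.
Qed.

Lemma mm_strict x y : 0 < x -> x < y -> Rbar_lt y (CV_radius a) -> mm x < mm y.
Proof.
  intros Hx Hxy HR.
  destruct (MVT_cor2 mm mm' x y Hxy) as [z [Heq Hz]].
  - intros z Hz. apply is_derive_Reals, mm_deriv; [lra|]. apply (Rbar_lt_trans_R _ y); [lra|auto].
  - assert (0 < mm' z) by (apply mm'_pos; [lra|apply (Rbar_lt_trans_R _ y); [lra|auto]]).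
    assert (0 < mm' z * (y - x)) by (apply Rmult_lt_0_compat; lra). lra.
Qed.
End G.

Lemma ball_R (x e y : R) : ball x e y <-> Rabs (y - x) < e.
Proof. unfold ball; simpl; unfold AbsRing_ball, abs, minus, plus, opp; simpl. tauto. Qed.

Lemma ev_left (R0 : Rbar) (y0 : R) (P : R -> Prop) : Rbar_lt y0 R0 ->
  (forall y, y0 < y -> Rbar_lt y R0 -> P y) -> Rbar_at_left R0 P.
Proof.
  intros H HP. destruct R0 as [r| |]; simpl in *.
  - assert (Hd : 0 < r - y0) by lra. exists (mkposreal _ Hd). intros u Hu Hlt.
    apply ball_R in Hu. simpl in Hu. apply HP; simpl; auto.
    apply Rabs_def2 in Hu. unfold minus, plus, opp in Hu; simpl in Hu. lra.
  - exists y0. intros u Hu. apply HP; simpl; auto.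
  - contradiction.
Qed.

Lemma nonK_mean a : in_K a -> ~ in_Kstar a -> forall x t, 0 < x < t -> Rbar_lt t (CV_radius a) -> mean a x < 1.
Proof.
  intros [Ha [Ha0 [Hk HR0]]] HnK x t Hxt HtR.
  destruct (Rlt_le_dec (mean a x) 1) as [|Hge]; auto. exfalso. apply HnK.
  assert (Hmono : forall y1 y2, 0 < y1 -> y1 < y2 -> Rbar_lt y2 (CV_radius a) -> mean a y1 < mean a y2).
  { intros y1 y2 H1 H2 H3. rewrite !mean_mm; auto.
    - apply mm_strict; auto.
    - apply Rbar_lt_abs; [lra|auto].
    - apply Rbar_lt_abs; [lra|apply (Rbar_lt_trans_R _ y2); [lra|auto]]. }
  assert (Ht1 : 1 < mean a t) by (specialize (Hmono x t ltac:(lra) ltac:(lra) HtR); lra).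
  set (E := fun v => exists y, t <= y /\ Rbar_lt y (CV_radius a) /\ v = mean a y).
  destruct (Lub_Rbar_correct E) as [Hub Hleast].
  set (L := Lub_Rbar E) in *.
  assert (HtE : E (mean a t)) by (exists t; repeat split; auto; lra).
  assert (HmE : forall y, t <= y -> Rbar_lt y (CV_radius a) -> Rbar_le (mean a y) L).
  { intros y H1 H2. apply Hub. exists y; auto. }
  exists L. split.
  2:{ eapply Rbar_lt_le_trans; [|apply (Hub _ HtE)]. simpl. auto. }
  intros P HP. unfold filtermap.
  destruct L as [l| |] eqn:HL.
  - destruct HP as [eps Heps].
    destruct (classic (exists y0, t <= y0 /\ Rbar_lt y0 (CV_radius a) /\ l - eps < mean a y0)) as [[y0 [Hy0t [Hy0R Hy0]]]|Hno].
    + apply (ev_left _ y0); auto. intros y Hy HyR. apply Heps. apply ball_R.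
      assert (mean a y0 < mean a y) by (apply Hmono; auto; lra).
      assert (Rbar_le (mean a y) l) by (apply HmE; auto; lra). simpl in H0.
      apply Rabs_def1; lra.
    + assert (Hb : Rbar_le (Finite l) (l - eps)).
      { apply Hleast. intros v [y [H1 [H2 ->]]]. simpl. destruct (Rle_lt_dec (mean a y) (l - eps)); auto.
        exfalso; apply Hno; exists y; auto. }
      simpl in Hb. destruct eps; simpl in *; lra.
  - destruct HP as [M HM].
    destruct (classic (exists y0, t <= y0 /\ Rbar_lt y0 (CV_radius a) /\ M < mean a y0)) as [[y0 [Hy0t [Hy0R Hy0]]]|Hno].
    + apply (ev_left _ y0); auto. intros y Hy HyR. apply HM.
      assert (mean a y0 < mean a y) by (apply Hmono; auto; lra). lra.
    + assert (Hb : Rbar_le p_infty M).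
      { apply Hleast. intros v [y [H1 [H2 ->]]]. simpl. destruct (Rle_lt_dec (mean a y) M); auto.
        exfalso; apply Hno; exists y; auto. }
      simpl in Hb. contradiction.
  - assert (Hc := Hub _ HtE). simpl in Hc. contradiction.
Qed.

Lemma pow_le_one x n : 0 <= x -> x <= 1 -> x ^ n <= 1.
Proof. intros H1 H2. rewrite <- (pow1 n). apply pow_incr; auto. Qed.

Lemma C_ball (x y : Complex.C) (e : R) : ball x e y <-> Rabs (Re y - Re x) < e /\ Rabs (Im y - Im x) < e.
Proof.
  destruct x as [x1 x2], y as [y1 y2]. unfold ball; simpl. unfold prod_ball; simpl.
  rewrite !ball_R. tauto.
Qed.

Lemma sum_n_Re (f : nat -> Complex.C) N : sum_n (fun n => Re (f n)) N = Re (sum_n f N).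
Proof.
  induction N.
  - rewrite !sum_O. reflexivity.
  - rewrite !sum_Sn, IHN. reflexivity.
Qed.

Lemma sum_n_Im (f : nat -> Complex.C) N : sum_n (fun n => Im (f n)) N = Im (sum_n f N).
Proof.
  induction N.
  - rewrite !sum_O. reflexivity.
  - rewrite !sum_Sn, IHN. reflexivity.
Qed.

Lemma C_parts (f : nat -> Complex.C) l : is_series f l ->
  is_series (fun n => Re (f n)) (Re l) /\ is_series (fun n => Im (f n)) (Im l).
Proof.
  intros H. unfold is_series in *.
  pose proof (proj1 (filterlim_locally (F := eventually) (sum_n f) l) H) as H'. clear H. rename H' into H. split.
  - apply filterlim_locally. intros eps. generalize (H eps). apply filter_imp.
    intros N HN. destruct (proj1 (C_ball _ _ _) HN). rewrite sum_n_Re. apply ball_R. tauto.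
  - apply filterlim_locally. intros eps. generalize (H eps). apply filter_imp.
    intros N HN. destruct (proj1 (C_ball _ _ _) HN). rewrite sum_n_Im. apply ball_R. tauto.
Qed.

Lemma Cmod_cterm c z n : Cmod (cterm c z n) = Rabs (c n) * Cmod z ^ n.
Proof. unfold cterm. rewrite Cmod_mult, Cmod_R, Cmod_pow. reflexivity. Qed.

Lemma csum_ok c z : ex_series (fun n => Cmod (cterm c z n)) -> is_series (cterm c z) (csum c z).
Proof.
  intros H.
  assert (Hex : ex_series (cterm c z)).
  { apply (@ex_series_le C_AbsRing C_CompleteNormedModule _ (fun n => Cmod (cterm c z n))); auto.
    intros n. right. reflexivity. }
  destruct Hex as [l Hl].
  destruct (C_parts _ _ Hl) as [H1 H2].
  unfold csum. rewrite (is_series_unique _ _ H1), (is_series_unique _ _ H2).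
  destruct l; exact Hl.
Qed.

Lemma ex_cterm (At : nat -> R) z : (forall n, 0 <= At n) -> ex_series At -> Cmod z <= 1 ->
  ex_series (fun n => Cmod (cterm At z n)).
Proof.
  intros Hp Hex Hz. apply (@ex_series_le R_AbsRing R_CompleteNormedModule _ At); auto.
  intros n. rewrite Cmod_cterm. unfold norm; simpl. unfold abs; simpl.
  rewrite Rabs_pos_eq.
  - rewrite Rabs_pos_eq by auto. rewrite <- (Rmult_1_r (At n)) at 2. apply Rmult_le_compat_l; auto.
    apply pow_le_one; [apply Cmod_ge_0 | auto].
  - apply Rmult_le_pos; [apply Rabs_pos|apply pow_le, Cmod_ge_0].
Qed.

Lemma im_le_Cmod c : Rabs (Im c) <= Cmod c.
Proof.
  assert (H := Cmod2_alt c). assert (H2 : Rabs (Im c) ^ 2 = Im c ^ 2) by apply pow2_abs.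
  assert (H3 := Cmod_ge_0 c). assert (H4 := Rabs_pos (Im c)).
  assert (0 <= Re c ^ 2) by (apply pow2_ge_0). nra.
Qed.

Lemma Cmod_le_sum w : Cmod w <= Rabs (Re w) + Rabs (Im w).
Proof.
  assert (H := Cmod2_alt w). assert (H1 : Rabs (Im w) ^ 2 = Im w ^ 2) by apply pow2_abs.
  assert (H2 : Rabs (Re w) ^ 2 = Re w ^ 2) by apply pow2_abs.
  assert (H3 := Cmod_ge_0 w). assert (H4 := Rabs_pos (Im w)). assert (H5 := Rabs_pos (Re w)). nra.
Qed.

Lemma Cmod_sum_n (f : nat -> Complex.C) N : Cmod (sum_n f N) <= sum_f_R0 (fun n => Cmod (f n)) N.
Proof.
  induction N.
  - rewrite sum_O. simpl. lra.
  - rewrite sum_Sn. simpl. eapply Rle_trans; [apply Cmod_triangle|]. lra.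
Qed.

Lemma Cmod_series_bound (f : nat -> Complex.C) l B : is_series f l -> (forall N, Cmod (sum_n f N) <= B) -> Cmod l <= B.
Proof.
  intros H HB.
  assert (Hl : is_lim_seq (fun N => Cmod (sum_n f N)) (Cmod l)).
  { exact (filterlim_comp _ _ _ (sum_n f) norm eventually (locally l) (locally (norm l)) H (filterlim_norm l)). }
  assert (Hc := is_lim_seq_const B).
  exact (is_lim_seq_le _ _ _ _ HB Hl Hc).
Qed.

Lemma disk_bound (At : nat -> R) z : (forall n, 0 <= At n) -> At 0%nat = 0 ->
  (forall N, sum_f_R0 At N <= 1) -> Cmod z < 1 -> Cmod (csum At z) < 1.
Proof.
  intros Hp H0 HB Hz.
  destruct (pos_bounded At 1 Hp HB) as [Hex _].
  assert (Hs := csum_ok At z (ex_cterm At z Hp Hex (Rlt_le _ _ Hz))).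
  apply Rle_lt_trans with (Cmod z); auto.
  apply (Cmod_series_bound _ _ _ Hs). intros N.
  eapply Rle_trans; [apply Cmod_sum_n|].
  apply Rle_trans with (sum_f_R0 (fun n => At n * Cmod z) N).
  - apply sum_Rle. intros n _. rewrite Cmod_cterm, Rabs_pos_eq by auto.
    destruct n.
    + rewrite H0. lra.
    + apply Rmult_le_compat_l; auto. change (Cmod z ^ S n) with (Cmod z * Cmod z ^ n).
      assert (Cmod z ^ n <= 1) by (apply pow_le_one; [apply Cmod_ge_0|lra]).
      assert (0 <= Cmod z) by apply Cmod_ge_0. nra.
  - rewrite <- scal_sum. specialize (HB N). assert (H := Cmod_ge_0 z). nra.
Qed.

Lemma Cpow_diff z z0 n : Cmod z <= 1 -> Cmod z0 <= 1 ->
  Cmod (Cminus (Cpow z n) (Cpow z0 n)) <= INR n * Cmod (Cminus z z0).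
Proof.
  intros Hz Hz0. induction n.
  - simpl. replace (Cminus 1 1) with (RtoC 0) by ring. rewrite Cmod_0. lra.
  - replace (Cminus (Cpow z (S n)) (Cpow z0 (S n))) with
      (Cplus (Cmult z (Cminus (Cpow z n) (Cpow z0 n))) (Cmult (Cminus z z0) (Cpow z0 n))) by (simpl; ring).
    eapply Rle_trans; [apply Cmod_triangle|]. rewrite !Cmod_mult, Cmod_pow.
    assert (Cmod z0 ^ n <= 1) by (apply pow_le_one; [apply Cmod_ge_0|auto]).
    assert (H1 := Cmod_ge_0 z). assert (H2 := Cmod_ge_0 (Cminus z z0)).
    assert (H3 := Cmod_ge_0 (Cminus (Cpow z n) (Cpow z0 n))). assert (H4 := pow_le (Cmod z0) n (Cmod_ge_0 _)).
    rewrite S_INR. nra.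
Qed.

Lemma Series_nonneg f : (forall n, 0 <= f n) -> ex_series f -> 0 <= Series f.
Proof.
  intros Hp Hex. eapply Rle_trans; [apply (Hp 0%nat)|].
  apply (psum_le_series f _ 0 (Series_correct _ Hex) Hp).
Qed.

Lemma tail_small (T : nat -> R) : (forall n, 0 <= T n) -> ex_series T -> forall eps, 0 < eps ->
  exists N, Series (fun k => T (S N + k)%nat) < eps.
Proof.
  intros Hp Hex eps He.
  assert (Hl := is_series_lim _ _ (Series_correct _ Hex)).
  apply is_lim_seq_spec in Hl. destruct (Hl (mkposreal eps He)) as [N HN].
  exists N. specialize (HN N (Nat.le_refl _)). simpl in HN.
  rewrite (Series_incr_n T (S N)) in HN by (auto; lia). simpl pred in HN.
  assert (0 <= Series (fun k => T (S N + k)%nat)).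
  { apply Series_nonneg; auto. apply (ex_series_incr_n T (S N)); auto. }
  replace (sum_f_R0 T N - (sum_f_R0 T N + Series (fun k : nat => T (S N + k)%nat)))
    with (- Series (fun k : nat => T (S N + k)%nat)) in HN by ring.
  rewrite Rabs_Ropp, Rabs_pos_eq in HN; auto.
Qed.

Lemma series_bound (w T : nat -> R) N d : (forall n, 0 <= T n) -> ex_series T -> 0 <= d ->
  (forall n, Rabs (w n) <= 2 * T n) -> (forall n, Rabs (w n) <= INR n * T n * d) ->
  Rabs (Series w) <= INR N * d * Series T + 2 * Series (fun k => T (S N + k)%nat).
Proof.
  intros Hp Hex Hd H2 Hn.
  assert (Hex2 : ex_series (fun n => 2 * T n)) by (apply (ex_series_scal_l 2 T); auto).
  assert (Hwa : ex_series (fun n => Rabs (w n))).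
  { apply (@ex_series_le R_AbsRing R_CompleteNormedModule _ (fun n => 2 * T n)); auto.
    intros n. unfold norm; simpl; unfold abs; simpl. rewrite Rabs_Rabsolu. auto. }
  assert (Hw : ex_series w) by (apply ex_series_Rabs; auto).
  rewrite (Series_incr_n w (S N)) by (auto; lia). simpl pred.
  eapply Rle_trans; [apply Rabs_triang|]. apply Rplus_le_compat.
  - eapply Rle_trans; [apply sum_f_R0_triangle|].
    apply Rle_trans with (sum_f_R0 (fun i => T i * (INR N * d)) N).
    + apply sum_Rle. intros i Hi. eapply Rle_trans; [apply Hn|].
      assert (INR i <= INR N) by (apply le_INR; auto). assert (0 <= T i * d) by (apply Rmult_le_pos; auto). nra.
    + rewrite <- scal_sum. apply Rmult_le_compat_l; [apply Rmult_le_pos; auto; apply pos_INR|].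
      apply psum_le_series; auto. apply Series_correct; auto.
  - assert (Hta : ex_series (fun k => Rabs (w (S N + k)%nat))) by (apply (ex_series_incr_n (fun n => Rabs (w n)) (S N)); auto).
    eapply Rle_trans; [apply Series_Rabs; auto|].
    rewrite <- Series_scal_l. apply Series_le.
    + intros n; split; [apply Rabs_pos|auto].
    + apply (ex_series_incr_n (fun n => 2 * T n) (S N)); auto.
Qed.

Lemma part_bound (pr : Complex.C -> R) (At : nat -> R) z z0 N :
  (forall r p, pr (Cmult (RtoC r) p) = r * pr p) ->
  (forall p q, pr (Cminus p q) = pr p - pr q) ->
  (forall q, Rabs (pr q) <= Cmod q) ->
  (forall n, 0 <= At n) -> ex_series At -> Cmod z <= 1 -> Cmod z0 <= 1 ->
  ex_series (fun n => pr (cterm At z n)) -> ex_series (fun n => pr (cterm At z0 n)) ->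
  Rabs (Series (fun n => pr (cterm At z n)) - Series (fun n => pr (cterm At z0 n)))
   <= INR N * Cmod (Cminus z z0) * Series At + 2 * Series (fun k => At (S N + k)%nat).
Proof.
  intros Hm Hs Hb Hp Hex Hz Hz0 E1 E2.
  rewrite <- Series_minus by auto.
  apply series_bound; auto; [apply Cmod_ge_0| |]; intros n; unfold cterm;
   rewrite !Hm, <- Rmult_minus_distr_l, <- Hs, Rabs_mult, Rabs_pos_eq by auto;
   eapply Rle_trans; try (apply Rmult_le_compat_l; [auto|apply Hb]).
  - eapply Rle_trans; [apply Rmult_le_compat_l; [auto|apply Cmod_triangle]|].
    rewrite Cmod_opp, !Cmod_pow.
    assert (Cmod z ^ n <= 1) by (apply pow_le_one; [apply Cmod_ge_0|auto]).
    assert (Cmod z0 ^ n <= 1) by (apply pow_le_one; [apply Cmod_ge_0|auto]).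
    specialize (Hp n). nra.
  - eapply Rle_trans; [apply Rmult_le_compat_l; [auto|apply Cpow_diff; auto]|]. lra.
Qed.

Lemma Re_part_ex (At : nat -> R) z : (forall n, 0 <= At n) -> ex_series At -> Cmod z <= 1 ->
  ex_series (fun n => Re (cterm At z n)) /\ ex_series (fun n => Im (cterm At z n)).
Proof.
  intros Hp Hex Hz. assert (H := csum_ok At z (ex_cterm At z Hp Hex Hz)).
  destruct (C_parts _ _ H) as [H1 H2]. split; eexists; eauto.
Qed.

Lemma csum_cont (At : nat -> R) z0 : (forall n, 0 <= At n) -> ex_series At -> Cmod z0 <= 1 ->
  filterlim (csum At) (within (fun z => Cmod z <= 1) (locally z0)) (locally (csum At z0)).
Proof.
  intros Hp Hex Hz0. apply filterlim_locally. intros [eps He]. simpl.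
  assert (He4 : 0 < eps / 4) by lra.
  destruct (tail_small At Hp Hex _ He4) as [N HN].
  set (ST := Series At).
  assert (HST : 0 <= ST) by (apply Series_nonneg; auto).
  set (X := INR N * ST).
  assert (HX : 0 <= X) by (apply Rmult_le_pos; auto; apply pos_INR).
  assert (Hdel : 0 < eps / (4 * (X + 1))) by (apply Rdiv_lt_0_compat; lra).
  set (del := eps / (4 * (X + 1))) in *.
  assert (Hq : del * (4 * (X + 1)) = eps) by (unfold del; field; lra).
  exists (mkposreal del Hdel). intros z Hz HzD. simpl in Hz.
  destruct (proj1 (C_ball _ _ _) Hz) as [Hr Hi].
  assert (Hd : Cmod (Cminus z z0) < 2 * del).
  { eapply Rle_lt_trans; [apply Cmod_le_sum|]. destruct z, z0. simpl in *. unfold Rminus in *. lra. }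
  assert (Hfin : INR N * Cmod (Cminus z z0) * ST + 2 * Series (fun k => At (S N + k)%nat) < eps).
  { assert (INR N * Cmod (Cminus z z0) * ST <= X * (2 * del)).
    { unfold X. assert (H0 := pos_INR N). assert (H1 := Cmod_ge_0 (Cminus z z0)).
      assert (0 <= INR N * ST) by (apply Rmult_le_pos; auto). nra. }
    nra. }
  destruct (Re_part_ex At z Hp Hex HzD) as [Ez1 Ez2].
  destruct (Re_part_ex At z0 Hp Hex Hz0) as [Ez01 Ez02].
  apply C_ball. unfold csum; simpl. split.
  - eapply Rle_lt_trans; [|apply Hfin].
    apply (part_bound (fun p => Re p)); auto;
      first [apply re_le_Cmod | intros r p; destruct p; simpl; ring | intros p q; destruct p, q; simpl; ring].
  - eapply Rle_lt_trans; [|apply Hfin].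
    apply (part_bound (fun p => Im p)); auto;
      first [apply im_le_Cmod | intros r p; destruct p; simpl; ring | intros p q; destruct p, q; simpl; ring].
Qed.

Lemma RtoC_mult r s : RtoC (r * s) = Cmult (RtoC r) (RtoC s).
Proof. unfold RtoC, Cmult; simpl. f_equal; ring. Qed.

Lemma Cpow_scale r z n : Cpow (Cmult (RtoC r) z) n = Cmult (RtoC (r ^ n)) (Cpow z n).
Proof.
  induction n; simpl.
  - unfold RtoC, Cmult; simpl. f_equal; ring.
  - rewrite IHn, RtoC_mult. ring.
Qed.

Lemma sum_first (f : nat -> R) n : (forall k, (1 <= k)%nat -> f k = 0) -> sum_f_R0 f n = f 0%nat.
Proof. intros H; induction n; simpl; auto. rewrite IHn, (H (S n)); [ring|lia]. Qed.

Theorem proposition6p3 :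
  forall (a A : nat -> R),
    in_K a ->
    lagrange_sol a A ->
    forall (t : R) (At : nat -> R),
      0 <= t -> Rbar_lt (Finite t) (CV_radius a) ->
      lagrange_sol (psi_t_coef a t) At ->
      (0 < t ->
        (forall z : Complex.C, Cmod z <= 1 ->
           exists l : Complex.C,
             is_series (cterm At z) l /\
             is_series (cterm A (Cmult (RtoC (t / PSeries a t)) z))
                       (Cmult (RtoC t) l)) /\
        (forall z0 : Complex.C, Cmod z0 <= 1 ->
           filterlim (csum At) (within (fun z => Cmod z <= 1) (locally z0))
                     (locally (csum At z0))) /\
        (forall z : Complex.C, Cmod z < 1 -> Cmod (csum At z) < 1)) /\
      (((in_Kstar a /\
         forall tau : R, 0 < tau -> Rbar_lt (Finite tau) (CV_radius a) ->
           mean a tau = 1 -> t <= tau)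
        \/ (~ in_Kstar a /\ 0 < t)) ->
       forall z : Complex.C, Cmod z <= 1 ->
         is_series (cterm (khinchin_g A (t / PSeries a t)) z) (csum At z)).
Proof.
  intros a A HK HA t At Ht0 HtR HAt.
  pose proof HK as HK'. destruct HK as [Ha [Ha0 [Hk HR0]]].
  assert (HAnn := A_nonneg a A Ha HA).
  assert (Hpos : 0 < t -> (forall n, At n = A n * (t / PSeries a t) ^ n / t)
     /\ (forall n, 0 <= At n) /\ (forall N, sum_f_R0 At N <= 1) /\ ex_series At).
  { intros Ht.
    assert (Hp : 0 < PSeries a t) by (apply psi_pos; auto).
    set (c := t / PSeries a t).
    destruct (G_facts a A Ha Ha0 HA t Ht HtR) as [Hex [HG0 HGt]]. fold c in Hex, HG0, HGt.
    assert (Heq : forall n, At n = A n * c ^ n / t).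
    { apply (lagrange_unique (psi_t_coef a t)); auto. split.
      - simpl. destruct HA as [H0 _]. rewrite H0. unfold Rdiv; ring.
      - intros n. rewrite (sum_eq _ (fun k => a k * fpow A k n * (c ^ S n / t))).
        + rewrite <- scal_sum. destruct HA as [_ HS]. rewrite HS. unfold Rdiv. ring.
        + intros k _. unfold psi_t_coef. rewrite fpow_scale by lra. unfold c. simpl pow.
          field. split; [lra|]. split; [lra|]. apply pow_nonzero; lra. }
    assert (Hnn : forall n, 0 <= At n).
    { intros n. rewrite Heq. apply Rmult_le_pos; [apply Rmult_le_pos; [auto|apply pow_le]|].
      - unfold c. apply Rlt_le, Rdiv_lt_0_compat; auto.
      - apply Rlt_le, Rinv_0_lt_compat; auto. }
    assert (Hsum : forall N, sum_f_R0 At N <= 1).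
    { intros N. rewrite (sum_eq _ (fun n => A n * c ^ n * / t)) by (intros; rewrite Heq; reflexivity).
      rewrite <- scal_sum. apply (Rmult_le_reg_l t); auto. rewrite <- Rmult_assoc, Rinv_r, Rmult_1_l, Rmult_1_r by lra.
      eapply Rle_trans; [|apply HGt]. apply psum_le_series; [apply Series_correct; auto|].
      intros n; apply Rmult_le_pos; auto. apply pow_le. unfold c. apply Rlt_le, Rdiv_lt_0_compat; auto. }
    split; auto. split; auto. split; auto. apply (pos_bounded At 1 Hnn Hsum). }
  split.
  - intros Ht. destruct (Hpos Ht) as [Heq [Hnn [Hsum Hex]]].
    assert (HA0 : At 0%nat = 0) by (destruct HAt; auto).
    split; [|split].
    + intros z Hz. exists (csum At z). split.
      * apply csum_ok, ex_cterm; auto.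
      * apply (is_series_ext (fun n => Cmult (RtoC t) (cterm At z n))).
        -- intros n. unfold cterm. rewrite Cpow_scale, Heq.
           assert (E : Cmult (RtoC t) (RtoC (A n * (t / PSeries a t) ^ n / t)) = Cmult (RtoC (A n)) (RtoC ((t / PSeries a t) ^ n))).
           { rewrite <- !RtoC_mult. f_equal. field. lra. }
           transitivity (Cmult (Cmult (RtoC t) (RtoC (A n * (t / PSeries a t) ^ n / t))) (Cpow z n)); [apply Cmult_assoc|].
           rewrite E. symmetry; apply Cmult_assoc.
        -- apply (@is_series_scal_l C_AbsRing C_NormedModule). apply csum_ok, ex_cterm; auto.
    + intros z0 Hz0. apply csum_cont; auto.
    + intros z Hz. apply disk_bound; auto.
  - intros Hcase z Hz.
    destruct (Req_dec t 0) as [Ht00|Htn0].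
    + subst t.
      assert (Hpa : PSeries a 0 = a 0%nat) by apply PSeries_0.
      assert (HAt0 : At 0%nat = 0) by (destruct HAt; auto).
      assert (HAtS : forall n, At (S n) = delta0 n).
      { intros n. destruct HAt as [_ HS]. rewrite HS. rewrite sum_first.
        - unfold psi_t_coef. rewrite Hpa. simpl. field. lra.
        - intros k Hk1. unfold psi_t_coef. rewrite pow_i by lia. unfold Rdiv. rewrite Rmult_0_r, !Rmult_0_l. reflexivity. }
      assert (Hkh : forall n, khinchin_g A (0 / PSeries a 0) n = At n).
      { intros n. replace (0 / PSeries a 0) with 0 by (unfold Rdiv; ring).
        unfold khinchin_g. destruct (Req_EM_T 0 0) as [_|Hne]; [|lra].
        destruct n as [|[|m]]; [rewrite HAt0; reflexivity| rewrite HAtS; reflexivity| rewrite HAtS; reflexivity]. }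
      assert (Hnn : forall n, 0 <= At n) by (intros [|n]; [rewrite HAt0; lra|rewrite HAtS; destruct n; simpl; lra]).
      assert (Hex : ex_series At).
      { apply ex_series_incr_1. apply (ex_series_ext delta0). intros; rewrite HAtS; auto.
        eexists. apply is_series_first. intros; reflexivity. }
      apply (is_series_ext (cterm At z)).
      * intros n. unfold cterm. rewrite Hkh. reflexivity.
      * apply csum_ok, ex_cterm; auto.
    + assert (Ht : 0 < t) by lra.
      destruct (Hpos Ht) as [Heq [Hnn [Hsum Hex]]].
      assert (Hm : forall x, 0 < x < t -> mean a x < 1).
      { destruct Hcase as [[_ Htau]|[Hnk _]].
        - apply Kstar_mean; auto.
        - intros x Hx. apply (nonK_mean a HK' Hnk x t); auto. }
      assert (HG := G_eq_t a A Ha Ha0 HA t Ht HtR Hm).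
      assert (Hp : 0 < PSeries a t) by (apply psi_pos; auto).
      assert (Hkh : forall n, khinchin_g A (t / PSeries a t) n = At n).
      { intros n. unfold khinchin_g. destruct (Req_EM_T (t / PSeries a t) 0) as [Hc|_].
        - exfalso. assert (0 < t / PSeries a t) by (apply Rdiv_lt_0_compat; auto). lra.
        - rewrite (PSeries_R A), HG, Heq. reflexivity. }
      apply (is_series_ext (cterm At z)).
      * intros n. unfold cterm. rewrite Hkh. reflexivity.
      * apply csum_ok, ex_cterm; auto.
Qed.
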